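(* Let $M$ be a finite set, let $\mathcal{X}\subseteq\mathcal{P}(M)$ be a closure system on $M$, and let $\mathcal{M}=\{N_i\mid i\in I\}\subseteq\mathcal{P}(M)$ be a consortial domain on $M$. If $\mathcal{M}^{*}:=\mathcal{M}\cup\{M\}$ is a closure system on $M$, then $\bigcup_{N\in\mathcal{M}^{*}}\mathcal{X}_N$ is a closure system on $M$.
   Context: A closure system on $M$ is a family of subsets of $M$ containing $M$ and closed under intersections. A consortial domain on $M$ is a family $\mathcal{M}=\{N_i\mid i\in I\}\subseteq\mathcal{P}(M)$ with $\bigcup_{i\in I}N_i=M$. For $N\subseteq M$, $\mathcal{X}_N:=\{X\cap N\mid X\in\mathcal{X}\}$. *)

(* Defs.v *)
From mathcomp Require Import all_boot.
Set Implicit Arguments. Unset Strict Implicit. Unset Printing Implicit Defensive.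

Definition closure_system (T : finType) (M : {set T}) (X : {set {set T}}) : Prop :=
  [/\ X \subset powerset M,
      M \in X &
      forall F : {set {set T}}, F \subset X -> F != set0 ->
        \bigcap_(A in F) A \in X].

Definition consortial_domain (T : finType) (M : {set T}) (D : {set {set T}}) : Prop :=
  D \subset powerset M /\ \bigcup_(N in D) N = M.

Definition trace (T : finType) (X : {set {set T}}) (N : {set T}) : {set {set T}} :=
  [set A :&: N | A in X].

(* Main.v *)
Require Import Defs.
From mathcomp Require Import all_boot.
Set Implicit Arguments. Unset Strict Implicit. Unset Printing Implicit Defensive.

Definition cl (T : finType) (C : {set {set T}}) (B : {set T}) : {set T} :=
  \bigcap_(A in [set A in C | B \subset A]) A.

Lemma cl_in (T : finType) (M : {set T}) (C : {set {set T}}) (B : {set T}) :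
  closure_system M C -> B \subset M -> cl C B \in C.
Proof.
case=> _ MC H BM; apply: H; first by apply/subsetP=> A; rewrite inE => /andP[].
by apply/set0Pn; exists M; rewrite inE MC.
Qed.

Lemma cl_sup (T : finType) (C : {set {set T}}) (B : {set T}) : B \subset cl C B.
Proof. by apply/bigcapsP=> A; rewrite inE => /andP[]. Qed.

Lemma cl_min (T : finType) (C : {set {set T}}) (B A : {set T}) :
  A \in C -> B \subset A -> cl C B \subset A.
Proof. by move=> AinC BA; by apply: (bigcap_inf A); rewrite inE AinC. Qed.

Theorem mainTheorem3 (T : finType) (M : {set T}) (X D : {set {set T}}) :
  closure_system M X ->
  consortial_domain M D ->
  closure_system M (D :|: [set M]) ->
  closure_system M (\bigcup_(N in D :|: [set M]) trace X N).
Proof.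
move=> HX HD HDs; set Ds := D :|: [set M].
have MDs : M \in Ds by rewrite !inE eqxx orbT.
have [XP MX _] := HX.
have YP : forall B, B \in \bigcup_(N in Ds) trace X N ->
   [/\ B \subset M & B = cl X B :&: cl Ds B].
  move=> B /bigcupP[N NDs /imsetP[A AX ->]].
  have AM : A \subset M by move: (subsetP XP A AX); rewrite inE.
  have BM : A :&: N \subset M by apply: subset_trans (subsetIl _ _) AM.
  split=> //; apply/eqP; rewrite eqEsubset subsetI !cl_sup /=.
  apply: setISS; apply: cl_min => //; [exact: subsetIl | exact: subsetIr].
split.
- apply/subsetP=> B /YP[BM _]; by rewrite inE.
- by apply/bigcupP; exists M => //; apply/imsetP; exists M => //; rewrite setIid.
move=> F FY F0.
have FM : forall B, B \in F -> B \subset M.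
  by move=> B /(subsetP FY) /YP[].
set A0 := \bigcap_(A in [set cl X B | B in F]) A.
set N0 := \bigcap_(N in [set cl Ds B | B in F]) N.
have [B0 B0F] := set0Pn _ F0.
have A0X : A0 \in X.
  have [_ _ H] := HX; apply: H.
    apply/subsetP=> A /imsetP[B BF ->]; exact: (cl_in HX (FM B BF)).
  by apply/set0Pn; exists (cl X B0); apply: imset_f.
have N0D : N0 \in Ds.
  have [_ _ H] := HDs; apply: H.
    apply/subsetP=> A /imsetP[B BF ->]; exact: (cl_in HDs (FM B BF)).
  by apply/set0Pn; exists (cl Ds B0); apply: imset_f.
apply/bigcupP; exists N0 => //; apply/imsetP; exists A0 => //.
apply/setP=> x; rewrite inE; apply/bigcapP/andP.
- move=> Hx; split; apply/bigcapP=> A /imsetP[B BF ->];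
  have := Hx B BF; have [_ EB] := YP B (subsetP FY B BF);
  rewrite [in x \in B]EB inE => /andP[] //.
- case=> /bigcapP HA /bigcapP HN B BF.
  have [_ ->] := YP B (subsetP FY B BF); rewrite inE.
  by rewrite HA ?HN //; apply: imset_f.
Qed.
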